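(* Let $\ell:\mathcal{H}\times\mathcal{Z}\times\mathcal{Z}\to[0,B]$ be a $B$-bounded pairwise loss, let $z_1,\dots,z_n$ be a stream, and let buffers of size $s$ be maintained by the RS-x algorithm (described below). Assume $\mathcal{R}_s(\ell\circ\mathcal{H})=C_d\cdot O(\sqrt{1/s})$. Then for any fixed $h\in\mathcal{H}$ and any $t\in[1,n-1]$, with probability at least $1-\delta$ over the random variables used to update the buffer until time $t$, \[ \hat{\mathcal{L}}^{\mathrm{buf}}_t(h)\le\hat{\mathcal{L}}_t(h)+C_d\cdot O\!\left(\sqrt{\frac{\log\frac1\delta}{s}}\right). \]
   Context: All-pairs penalty $\hat{\mathcal{L}}_t(h)=\frac1{t-1}\sum_{\tau=1}^{t-1}\ell(h,z_t,z_\tau)$; buffer penalty $\hat{\mathcal{L}}^{\mathrm{buf}}_t(h)=\frac1{|B_t|}\sum_{z\in B_t}\ell(h,z_t,z)$, where $B_t$ is the buffer after processing $z_1,\dots,z_{t-1}$. RS-x update with the point $z_t$ at step $t$: if $|B|<s$, add $z_t$; else if $t=s+1$, replace $B$ by $s$ points sampled uniformly with replacement from $B\cup\{z_t\}$; else independently replace each buffer entry by $z_t$ with probability $1/t$. $\mathcal{R}_s(\ell\circ\mathcal{H})=\mathbb{E}[\sup_h\frac1s\sum_{j=1}^s\epsilon_j\ell(h,z,z_j)]$; $C_d$ is its dependence on the input dimension $d$; $O(\cdot)$ hides constants such as $B$. *)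

(* Defs.v *)
From HB Require Import structures.
From mathcomp Require Import all_boot all_order all_algebra.
From mathcomp Require Import all_classical all_reals all_analysis.
Set Implicit Arguments. Unset Strict Implicit. Unset Printing Implicit Defensive.
Import Order.TTheory GRing.Theory Num.Theory.
Local Open Scope ring_scope.

Definition dist (R : Type) (A : Type) := seq (R * A).

Section Dist.
Variable R : realType.

Definition dret (A : Type) (a : A) : dist R A := [:: (1, a)].

Definition dbind (A B : Type) (d : dist R A) (f : A -> dist R B) : dist R B :=
  flatten [seq [seq (p.1 * q.1, q.2) | q <- f p.2] | p <- d].

Definition dprob (A : Type) (d : dist R A) (E : A -> bool) : R :=
  \sum_(p <- d) (if E p.2 then p.1 else 0).

Variable Z : Type.

(* each buffer entry independently replaced by zt with probability 1/tau *)
Definition rsx_coins (tau : nat) (zt : Z) (b : seq Z) : dist R (seq Z) :=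
  foldr (fun x acc => dbind acc (fun rest =>
           [:: (tau%:R^-1, zt :: rest); (1 - tau%:R^-1, x :: rest)]))
        (dret [::]) b.

(* s points sampled uniformly with replacement from the list b ++ [:: zt]
   (of size s+1) *)
Definition rsx_resample (s : nat) (zt : Z) (b : seq Z) : dist R (seq Z) :=
  [seq ((s.+1)%:R ^- s, [seq nth zt (rcons b zt) (f j) | j <- enum 'I_s])
  | f : {ffun 'I_s -> 'I_s.+1} <- enum {ffun 'I_s -> 'I_s.+1}].

Definition rsx_step (s tau : nat) (zt : Z) (b : seq Z) : dist R (seq Z) :=
  if (size b < s)%N then dret (rcons b zt)
  else if tau == s.+1 then rsx_resample s zt b
  else rsx_coins tau zt b.

(* distribution of the buffer after processing z_1, ..., z_k
   (the stream is z : nat -> Z, indexed from 1) *)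
Fixpoint rsx_buffer (s : nat) (z : nat -> Z) (k : nat) : dist R (seq Z) :=
  match k with
  | 0 => dret [::]
  | k'.+1 => dbind (rsx_buffer s z k') (rsx_step s k (z k))
  end.

Variable H : Type.

Definition allpairs_risk (l : H -> Z -> Z -> R) (z : nat -> Z) (t : nat)
  (h : H) : R :=
  (t.-1)%:R^-1 * \sum_(1 <= tau < t) l h (z t) (z tau).

Definition buffer_risk (l : H -> Z -> Z -> R) (zt : Z) (b : seq Z)
  (h : H) : R :=
  (size b)%:R^-1 * \sum_(x <- b) l h zt x.

End Dist.

Section Rademacher.
Context {R : realType} {d : measure_display} {Z : measurableType d}.
Variable D : probability Z R.

(* iterated expectation over k i.i.d. draws from D *)
Fixpoint iter_expect (k : nat) (F : seq Z -> R) : R :=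
  match k with
  | 0 => F [::]
  | k'.+1 => Rintegral D setT (fun x => iter_expect k' (fun xs => F (x :: xs)))
  end.

(* R_s(l o H) = E_{z, z_1..z_s ~ D, eps} [ sup_h (1/s) sum_j eps_j l(h,z,z_j) ],
   eps uniform on {-1,1}^s *)
Definition rademacher (H : Type) (l : H -> Z -> Z -> R) (s : nat) : R :=
  iter_expect s.+1 (fun zs =>
    match zs with
    | [::] => 0
    | z :: zs' =>
      (2 ^ s)%:R^-1 * \sum_(eps : {ffun 'I_s -> bool})
        sup [set (s%:R^-1 * \sum_(j < s)
                   (-1) ^+ (eps j) * l h z (nth z zs' j)) | h in [set: H]]
    end).
End Rademacher.

(* Main.v *)
Require Import Defs.
From HB Require Import structures.
From mathcomp Require Import all_boot all_order all_algebra.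
From mathcomp Require Import all_classical all_reals all_analysis.
Import Order.TTheory GRing.Theory Num.Theory.
Set Implicit Arguments. Unset Strict Implicit. Unset Printing Implicit Defensive.
Local Open Scope ring_scope.

From mathcomp Require Import ring lra.

Section Aux.
Variable R : realType.

Definition dexp (A : Type) (d : dist R A) (F : A -> R) : R :=
  \sum_(p <- d) p.1 * F p.2.

Lemma dexp_cat (A : Type) (d1 d2 : dist R A) F :
  dexp (d1 ++ d2) F = dexp d1 F + dexp d2 F.
Proof. by rewrite /dexp big_cat. Qed.

Lemma dexp_bind (A B : Type) (d : dist R A) (f : A -> dist R B) F :
  dexp (dbind d f) F = dexp d (fun a => dexp (f a) F).
Proof.
elim: d => [|p d IH]; first by rewrite /dexp /dbind !big_nil.
rewrite /dbind /= dexp_cat -/(dbind d f) IH /dexp big_cons big_map.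
rewrite big_distrr /=; congr (_ + _); apply: eq_bigr => q _; by rewrite mulrA.
Qed.

Lemma dexpZ (A : Type) (d : dist R A) (c : R) F :
  dexp d (fun a => c * F a) = c * dexp d F.
Proof. rewrite /dexp big_distrr; apply: eq_bigr => p _; by rewrite mulrCA. Qed.

Lemma dexpD (A : Type) (d : dist R A) F G :
  dexp d (fun a => F a + G a) = dexp d F + dexp d G.
Proof. rewrite /dexp -big_split; apply: eq_bigr => p _; by rewrite mulrDr. Qed.

Lemma dexp_supp (A : Type) (d : dist R A) (Q : pred A) F G :
  all (fun p => Q p.2) d -> (forall a, Q a -> F a = G a) -> dexp d F = dexp d G.
Proof.
move=> Hd HFG; elim: d Hd => [|p d IH] /=; first by rewrite /dexp !big_nil.
move=> /andP[Hp Hd]; rewrite /dexp !big_cons -!/(dexp _ _) IH // HFG //.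
Qed.

Definition supp (A : Type) (Q : pred A) (d : dist R A) :=
  all (fun p => (0 <= p.1) && Q p.2) d.

Lemma supp_bind (A B : Type) (d : dist R A) (f : A -> dist R B) Q Q' :
  supp Q d -> (forall a, Q a -> supp Q' (f a)) -> supp Q' (dbind d f).
Proof.
move=> Hd Hf; elim: d Hd => [|p d IH] //=.
move=> /andP[/andP[Hp1 Hp2] Hd]; rewrite /supp /dbind /= all_cat.
move: IH; rewrite /supp /dbind => -> //; rewrite andbT.
rewrite all_map; apply: sub_all (Hf _ Hp2) => q /andP[Hq1 Hq2] /=.
by rewrite Hq2 andbT mulr_ge0.
Qed.

Lemma supp_weaken (A : Type) (Q : pred A) (d : dist R A) :
  supp Q d -> all (fun p => Q p.2) d.
Proof. by apply: sub_all => p /andP[]. Qed.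

Lemma dprob_lb (A : Type) (d : dist R A) (Q : pred A) (E : A -> bool) G :
  supp Q d -> (forall a, Q a -> 0 <= G a) -> (forall a, Q a -> ~~ E a -> 1 <= G a) ->
  dexp d (fun=> 1) - dexp d G <= dprob d E.
Proof.
move=> Hd HG0 HG1; elim: d Hd => [|p d IH] /=.
  by rewrite /dexp /dprob !big_nil subr0.
move=> /andP[/andP[Hp1 Hp2] Hd]; rewrite /dexp /dprob !big_cons -!/(dexp _ _) -/(dprob _ _).
rewrite opprD addrACA lerD // ?IH // mulr1.
case: (boolP (E p.2)) => HE.
  by rewrite lerBlDr lerDl mulr_ge0 // HG0.
by rewrite subr_le0 -{1}(mulr1 p.1) ler_wpM2l // HG1.
Qed.

End Aux.

Section RS.
Variable R : realType.
Variable Z : Type.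
Variable s : nat.
Variable z : nat -> Z.

Lemma buf_det k : (k <= s)%N -> rsx_buffer R s z k = [:: (1, map z (iota 1 k))].
Proof.
elim: k => [|k IH] Hk //=.
rewrite IH ?(ltnW Hk) // /dbind /= /rsx_step size_map size_iota Hk /=.
rewrite mul1r -[RHS]/([:: (1, map z (iota 1 k.+1))]).
by rewrite -cats1 -(addn1 k) iotaD map_cat /= add1n addn1.
Qed.

Lemma coins_exp (tau : nat) (zt : Z) (b : seq Z) (g : Z -> R) :
  dexp (rsx_coins R tau zt b) (fun b' => \prod_(x <- b') g x) =
  \prod_(x <- b) (tau%:R^-1 * g zt + (1 - tau%:R^-1) * g x).
Proof.
elim: b => [|x b IH] /=.
  by rewrite /dexp /= big_cons !big_nil addr0 mulr1.
rewrite dexp_bind big_cons -IH -dexpZ; apply: eq_bigr => p _.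
congr (_ * _); rewrite /dexp /= !big_cons big_nil /=; ring.
Qed.

Lemma coins_supp (tau : nat) (zt : Z) (b : seq Z) :
  (0 < tau)%N -> supp (fun b' : seq Z => size b' == size b) (rsx_coins R tau zt b).
Proof.
move=> Ht; elim: b => [|x b IH] /=; first by rewrite /supp /dret /= ler01.
apply: supp_bind IH _ => a /eqP Ha; rewrite /supp /= Ha eqxx !andbT.
have H1 : tau%:R^-1 <= 1 :> R.
  by rewrite invf_le1 ?ltr0n // -[1]/(1%:R) ler_nat.
by rewrite subr_ge0 H1 invr_ge0 ler0n.
Qed.

Lemma resample_exp (zt : Z) (b : seq Z) (g : Z -> R) :
  dexp (rsx_resample R s zt b) (fun b' => \prod_(x <- b') g x) =
  ((s.+1)%:R^-1 * \sum_(i < s.+1) g (nth zt (rcons b zt) i)) ^+ s.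
Proof.
rewrite /dexp /rsx_resample big_map big_enum /=.
rewrite exprMn exprVn -big_distrr /=; congr (_ * _).
set S := \sum_(i < s.+1) _.
have -> : S ^+ s = \prod_(j < s) S by rewrite prodr_const card_ord.
rewrite /S bigA_distr_bigA /=.
apply: eq_big => [f|f _]; first by [].
by rewrite big_map big_enum /=.
Qed.

Lemma resample_supp (zt : Z) (b : seq Z) :
  supp (fun b' : seq Z => size b' == s) (rsx_resample R s zt b).
Proof.
rewrite /supp /rsx_resample all_map; apply/allP => f _ /=.
by rewrite size_map size_enum_ord eqxx andbT invr_ge0 exprn_ge0 // ler0n.
Qed.

Lemma buf_inv k : (s < k)%N ->
  supp (fun b : seq Z => size b == s) (rsx_buffer R s z k) /\
  forall g : Z -> R, dexp (rsx_buffer R s z k) (fun b => \prod_(x <- b) g x) =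
    (k%:R^-1 * \sum_(1 <= i < k.+1) g (z i)) ^+ s.
Proof.
elim: k => [|k IH] // Hk.
have [Hks|Hks] := eqVneq k s.
  subst k; rewrite /= buf_det //.
  have Hst : rsx_step R s s.+1 (z s.+1) [seq z i | i <- iota 1 s] =
             rsx_resample R s (z s.+1) [seq z i | i <- iota 1 s].
    by rewrite /rsx_step size_map size_iota ltnn eqxx.
  split.
    have HQ : supp (fun b : seq Z => size b == s)
        [:: ((1:R), [seq z i | i <- iota 1 s])].
      by rewrite /supp /= size_map size_iota eqxx ler01.
    apply: supp_bind HQ _.
    move=> a /eqP Ha; rewrite /rsx_step Ha ltnn eqxx; apply: resample_supp.
  move=> g; rewrite dexp_bind /dexp big_cons big_nil addr0 mul1r /= Hst.
  have := resample_exp (z s.+1) [seq z i | i <- iota 1 s] g; rewrite /dexp => ->.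
  congr ((_ * _) ^+ s).
  rewrite big_add1 /= big_mkord; apply: eq_bigr => i _.
  rewrite -map_rcons (nth_map 0); last by rewrite size_rcons size_iota.
  rewrite -cats1 (_ : [:: s.+1] = iota (1 + s) 1) // -iotaD nth_iota.
    by rewrite add1n.
  by rewrite addn1.
have Hsk : (s < k)%N by rewrite ltn_neqAle eq_sym Hks -ltnS.
have [IH1 IH2] := IH Hsk.
have Hst : forall a : seq Z, size a == s -> rsx_step R s k.+1 (z k.+1) a =
                                           rsx_coins R k.+1 (z k.+1) a.
  by move=> a /eqP Ha; rewrite /rsx_step Ha ltnn eqSS (negbTE Hks).
split.
  rewrite /=; apply: supp_bind IH1 _ => a Ha; rewrite Hst //.
  by move/eqP: Ha => <-; apply: coins_supp.
move=> g; rewrite /= dexp_bind.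
rewrite (dexp_supp (Q := fun b : seq Z => size b == s)
   (G := fun a => \prod_(x <- a) ((k.+1)%:R^-1 * g (z k.+1) + (1 - (k.+1)%:R^-1) * g x))).
  2: exact: supp_weaken IH1.
  2: by move=> a Ha; rewrite Hst // coins_exp.
rewrite IH2; congr (_ ^+ s).
rewrite [\sum_(1 <= i < k.+2) _]big_nat_recr //=.
rewrite big_split /= sumr_const_nat -big_distrr /=.
set S := \sum_(1 <= i < k.+1) g (z i).
have Hk0 : k%:R != 0 :> R by rewrite pnatr_eq0 -lt0n (leq_ltn_trans _ Hsk).
have Hk1 : (k.+1)%:R != 0 :> R by rewrite pnatr_eq0.
rewrite subSS subn0 -[_ *+ k]mulr_natr.
rewrite -[(k.+1)%:R]natr1 in Hk1 *.
by field; rewrite Hk0 Hk1.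
Qed.

End RS.

Section H.
Variable R : realType.

Lemma exp_bound (u : R) : u <= 1/2 -> expR u <= 1 + u + 2 * u ^+ 2.
Proof.
move=> Hu.
have H1 : 1 - u <= expR (- u) by have := expR_ge1Dx (- u).
have Hpos : 0 < 1 - u by lra.
have Heq : expR u * expR (- u) = 1 by rewrite expRxMexpNx_1.
have Hx : expR u * (1 - u) <= 1.
  by have := ler_wpM2l (expR_ge0 u) H1; rewrite Heq.
have Hp : 1 <= (1 - u) * (1 + u + 2 * u ^+ 2).
  have -> : (1 - u) * (1 + u + 2 * u ^+ 2) = 1 + u^+2 * (1 - 2 * u) by ring.
  rewrite lerDl mulr_ge0 ?sqr_ge0 //; lra.
have := le_trans Hx Hp.
by rewrite mulrC ler_pM2l.
Qed.

Lemma prod_expR (Z : Type) (b : seq Z) (f : Z -> R) :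
  \prod_(x <- b) expR (f x) = expR (\sum_(x <- b) f x).
Proof.
elim: b => [|x b IH]; first by rewrite !big_nil expR0.
by rewrite !big_cons IH expRD.
Qed.

Lemma sum_subc (Z : Type) (b : seq Z) (f : Z -> R) (m : R) :
  \sum_(x <- b) (f x - m) = \sum_(x <- b) f x - (size b)%:R * m.
Proof.
elim: b => [|x b IH]; first by rewrite !big_nil mul0r subr0.
rewrite !big_cons IH /= -addn1 natrD; ring.
Qed.

Lemma sum_le_size (Z : Type) (b : seq Z) (f : Z -> R) (B : R) :
  (forall x, f x <= B) -> \sum_(x <- b) f x <= (size b)%:R * B.
Proof.
move=> Hf; elim: b => [|x b IH]; first by rewrite big_nil mul0r.
rewrite big_cons /= -addn1 natrD mulrDl mul1r addrC lerD //.
Qed.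

End H.
Unset Implicit Arguments. Set Strict Implicit. Set Printing Implicit Defensive.

Theorem lemma21 (R : realType) (B K : R) :
  exists c : R, 0 <= c /\
  forall (d : measure_display) (Z : measurableType d) (D : probability Z R)
    (H : Type) (l : H -> Z -> Z -> R) (Cd : R) (s n : nat) (z : nat -> Z)
    (h : H) (t : nat) (delta : R),
    (forall h' x y, 0 <= l h' x y <= B) ->
    (0 < s)%N ->
    1 <= Cd ->
    rademacher D l s <= Cd * (K * Num.sqrt (s%:R^-1)) ->
    (1 <= t <= n.-1)%N ->
    0 < delta < 1 ->
    1 - delta <=
      dprob (rsx_buffer R s z t.-1)
        (fun b => buffer_risk l (z t) b h
                  <= allpairs_risk l z t h
                     + Cd * (c * Num.sqrt (ln delta^-1 / s%:R))).
Proof.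
exists (3 * `|B|); split; first by rewrite mulr_ge0 ?normr_ge0.
move=> d Z D H l Cd s n z h t delta Hl Hs HCd _ /andP[Ht1 _] /andP[Hd0 Hd1].
have HB : 0 <= B by have /andP[H0 H1] := Hl h (z 0%N) (z 0%N); exact: le_trans H0 H1.
rewrite ger0_norm //.
set a := ln delta^-1.
have Ha : 0 <= a by apply: ln_ge0; rewrite invf_ge1 // ltW.
set eps := 3 * B * Num.sqrt (a / s%:R).
have Heps : 0 <= eps by rewrite mulr_ge0 ?sqrtr_ge0 // mulr_ge0.
have HCd0 : 0 <= Cd by apply: le_trans HCd; exact: ler01.
have HE : eps <= Cd * eps by rewrite -{1}(mul1r eps) ler_wpM2r.
case: t Ht1 => // k _.
change (k.+1.-1) with k.
set zt := z k.+1.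
set L := fun x => l h zt x.
have HL0 : forall x, 0 <= L x by move=> x; case/andP: (Hl h zt x).
have HLB : forall x, L x <= B by move=> x; case/andP: (Hl h zt x).
set SL := \sum_(1 <= i < k.+1) L (z i).
set mu := allpairs_risk l z k.+1 h.
have Hmu : mu = k%:R^-1 * SL by [].
have Hs0 : (0 < s%:R :> R) by rewrite ltr0n.
have Hmu0 : 0 <= mu.
  by rewrite Hmu mulr_ge0 ?invr_ge0 ?ler0n // sumr_ge0.
have [Hks | Hks] := leqP k s.
  rewrite buf_det // /dprob big_cons big_nil addr0 /=.
  have -> : buffer_risk l zt [seq z i | i <- iota 1 k] h = mu.
    by rewrite /buffer_risk size_map size_iota big_map Hmu /SL /index_iota subSS subn0.
  rewrite lerDl mulr_ge0 //; lra.
have [Hsupp Hexp] := buf_inv R z Hks.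
have Hk0 : (0 < k%:R :> R) by rewrite ltr0n (leq_ltn_trans _ Hks).
have Hmass : dexp (rsx_buffer R s z k) (fun=> 1) = 1.
  have <- : dexp (rsx_buffer R s z k) (fun b => \prod_(x <- b) (1:R)) =
            dexp (rsx_buffer R s z k) (fun=> 1).
    by rewrite /dexp; apply: eq_bigr => p _; rewrite big1_eq.
  rewrite (Hexp (fun=> 1)) sumr_const_nat subSS subn0 mulVf ?expr1n //.
  by rewrite gt_eqF.
have HmuB : mu <= B.
  rewrite Hmu ler_pdivrMl // /SL.
  have := sum_le_size (index_iota 1 k.+1) (fun i => HLB (z i)).
  by rewrite size_iota subSS subn0.
set E := fun b => buffer_risk l zt b h <= mu + Cd * eps.
have HbufE : forall b : seq Z, size b == s -> buffer_risk l zt b h = s%:R^-1 * \sum_(x <- b) L x.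
  by move=> b /eqP Hb; rewrite /buffer_risk Hb.
have [Hbig | Hsmall] := leP B eps.
  apply: le_trans (dprob_lb (Q := fun b : seq Z => size b == s) (G := fun=> 0) Hsupp _ _).
  - rewrite Hmass /dexp big1 ?subr0; first lra.
    by move=> p _; rewrite mulr0.
  - by [].
  move=> b Hb; rewrite /E HbufE // ler_pdivrMl //.
  have := sum_le_size b HLB; rewrite (eqP Hb) => HS.
  have HBm : B <= mu + Cd * eps by lra.
  by rewrite (le_trans HS) // ler_wpM2l // ltW.
have HB0 : 0 < B by apply: le_lt_trans Hsmall.
set lam := eps / (4 * B ^+ 2).
have Hlam : 0 <= lam by rewrite divr_ge0 // mulr_ge0 // sqr_ge0.
have HlamB : lam * B <= 1 / 2.
  have -> : lam * B = eps / (4 * B) by rewrite /lam; field; rewrite gt_eqF.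
  rewrite ler_pdivrMr; last by rewrite mulr_gt0.
  lra.
pose g := fun x => expR (lam * (L x - mu)).
pose G := fun b : seq Z => expR (- (lam * s%:R * eps)) * \prod_(x <- b) g x.
apply: le_trans (dprob_lb (Q := fun b : seq Z => size b == s) (G := G) Hsupp _ _).
- rewrite Hmass lerD2l lerN2 /G dexpZ.
  rewrite (Hexp g).
  set A := k%:R^-1 * _.
  have HA0 : 0 <= A by rewrite mulr_ge0 ?invr_ge0 ?ler0n // sumr_ge0 // => i _; exact: expR_ge0.
  set c2 := 2 * lam ^+ 2 * B ^+ 2.
  have HA : A <= expR c2.
    apply: le_trans (expR_ge1Dx _).
    have Hsum : \sum_(1 <= i < k.+1) g (z i) <=
                \sum_(1 <= i < k.+1) (1 + lam * (L (z i) - mu) + c2).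
      apply: ler_sum => i _.
      apply: le_trans (exp_bound _) _.
        apply: le_trans HlamB; apply: ler_wpM2l => //.
        have := HLB (z i); lra.
      rewrite lerD2l /c2 exprMn -mulrA ler_wpM2l // ler_wpM2l ?sqr_ge0 //.
      have := HLB (z i); have := HL0 (z i).
      move=> H1 H2; rewrite -subr_ge0.
      have -> : B ^+ 2 - (L (z i) - mu) ^+ 2 = (B - (L (z i) - mu)) * (B + (L (z i) - mu)) by ring.
      apply: mulr_ge0; lra.
    rewrite /A; apply: le_trans (ler_wpM2l _ Hsum) _; first by rewrite invr_ge0 ler0n.
    rewrite big_split big_split /= sumr_const_nat sumr_const_nat subSS subn0.
    rewrite -big_distrr /= sum_subc size_iota -/SL.
    have -> : SL = k%:R * mu by rewrite Hmu mulrA mulfV ?mul1r // gt_eqF.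
    rewrite subn1 /= subrr mulr0 addr0 -(mulr_natr c2 k).
    have Hk0' : k%:R != 0 :> R by rewrite gt_eqF.
    by rewrite mulrDr mulVf // mulrCA mulVf // mulr1.
  have HAs : A ^+ s <= expR (s%:R * c2).
    rewrite expRM_natl; apply: lerXn2r => //; rewrite nnegrE //; exact: expR_ge0.
  apply: le_trans (ler_wpM2l (expR_ge0 _) HAs) _.
  rewrite -expRD.
  have Hdel : delta = expR (- a) by rewrite /a lnV ?posrE ?invr_gt0 // opprK lnK // posrE.
  rewrite Hdel ler_expR.
  have He2 : eps ^+ 2 = 9 * B ^+ 2 * (a / s%:R).
    rewrite /eps !exprMn sqr_sqrtr; last by rewrite divr_ge0 // ler0n.
    by congr (_ * _ * _); rewrite expr2; ring.
  have -> : - (lam * s%:R * eps) + s%:R * c2 = - (s%:R * eps ^+ 2 / (8 * B ^+ 2)).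
    by rewrite /c2 /lam; field; rewrite gt_eqF.
  rewrite He2.
  have -> : s%:R * (9 * B ^+ 2 * (a / s%:R)) / (8 * B ^+ 2) = 9 / 8 * a.
    by field; rewrite !gt_eqF.
  lra.
- move=> b _; rewrite /G mulr_ge0 ?expR_ge0 //; apply: prodr_ge0 => x _; exact: expR_ge0.
move=> b Hb; rewrite /E HbufE // -ltNge ltr_pdivlMl // => Hbad.
rewrite /G /g prod_expR -expRD -[X in X <= _]expR0 ler_expR -big_distrr /= sum_subc (eqP Hb).
have Hle : s%:R * (mu + eps) <= \sum_(x <- b) L x.
  apply: ltW; apply: le_lt_trans Hbad; rewrite ler_wpM2l ?ler0n //; lra.
have -> : - (lam * s%:R * eps) + lam * (\sum_(x <- b) L x - s%:R * mu) =
          lam * (\sum_(x <- b) L x - s%:R * (mu + eps)) by ring.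
by rewrite mulr_ge0 // subr_ge0.
Qed.
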